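(* Let $T\ge2$ and let $n\ge 2T^2$ be an integer. For $|x|\le T$ define $\tilde E_n(x)$ by $$h_{2p}(x)=\frac{(-1)^p}{\sqrt\pi\,p^{1/4}}\cos\varphi_{2p}(x)+\tilde E_{2p}(x)\quad\text{if }n=2p\text{ is even},$$ $$h_{2p+1}(x)=\frac{(-1)^p}{\sqrt\pi\,p^{1/4}}\sin\varphi_{2p+1}(x)+\tilde E_{2p+1}(x)\quad\text{if }n=2p+1\text{ is odd}.$$ Then for all $|x|,|y|\le T$, $$|\tilde E_n(x)|\le\frac{2T^2}{(2n+1)^{5/4}}\qquad\text{and}\qquad|\tilde E_n(x)-\tilde E_n(y)|\le\frac{3T^2}{(2n+1)^{3/4}}|x-y|.$$
   Context: For an integer $n\ge0$, $H_n(x)=(-1)^n e^{x^2}\frac{d^n}{dx^n}e^{-x^2}$ is the $n$-th Hermite polynomial and $h_n(x)=\frac{1}{\pi^{1/4}\sqrt{2^n n!}}H_n(x)e^{-x^2/2}$ is the $n$-th Hermite function; $(h_n)_{n\ge0}$ is an orthonormal basis of $L^2(\mathbb R)$ and $h_n''(x)+(2n+1-x^2)h_n(x)=0$. For $|x|\le\sqrt{2n+1}$, $\varphi_n(x)=\int_0^x\sqrt{2n+1-t^2}\,dt$. *)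

(* Defs.v *)
From Stdlib Require Import Reals Lra ClassicalEpsilon Arith Factorial.
Open Scope R_scope.

(* Physicists' Hermite polynomials H_n, via the standard three-term recurrence
   H_0 = 1, H_1 = 2x, H_{n+2} = 2x H_{n+1} - 2(n+1) H_n
   (equivalent to the Rodrigues formula (-1)^n e^{x^2} d^n/dx^n e^{-x^2}). *)
Fixpoint hermiteH (n : nat) (x : R) : R :=
  match n with
  | O => 1
  | S m =>
      match m with
      | O => 2 * x
      | S k => 2 * x * hermiteH m x - 2 * INR m * hermiteH k x
      end
  end.

Definition hermite_fun (n : nat) (x : R) : R :=
  / (Rpower PI (1/4) * sqrt (2 ^ n * INR (fact n))) * hermiteH n x * exp (- x ^ 2 / 2).

(* The Riemann integral of f over [a,b] (oriented), when it exists;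
   well defined since RiemannInt does not depend on the integrability proof. *)
Definition Rint (f : R -> R) (a b : R) : R :=
  epsilon (inhabits 0)
    (fun v => exists pr : Riemann_integrable f a b, RiemannInt pr = v).

Definition phi (n : nat) (x : R) : R :=
  Rint (fun t => sqrt (2 * INR n + 1 - t ^ 2)) 0 x.

Definition Etilde (n : nat) (x : R) : R :=
  let p := Nat.div2 n in
  let c := (-1) ^ p / (sqrt PI * Rpower (INR p) (1/4)) in
  if Nat.even n then hermite_fun n x - c * cos (phi n x)
  else hermite_fun n x - c * sin (phi n x).

(* Main.v *)
Require Import Defs.
From Stdlib Require Import Reals.
Open Scope R_scope.
From Stdlib Require Import Lra Lia Arith Factorial ClassicalEpsilon.
From Coquelicot Require Import Coquelicot.

Lemma d_mult (f g : R -> R) x a b : is_derive f x a -> is_derive g x b ->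
  is_derive (fun t => f t * g t) x (a * g x + f x * b).
Proof.
  intros Ha Hb. apply is_derive_Reals. apply is_derive_Reals in Ha, Hb.
  exact (derivable_pt_lim_mult f g x a b Ha Hb).
Qed.
Lemma d_minus (f g : R -> R) x a b : is_derive f x a -> is_derive g x b ->
  is_derive (fun t => f t - g t) x (a - b).
Proof.
  intros Ha Hb. apply is_derive_Reals. apply is_derive_Reals in Ha, Hb.
  exact (derivable_pt_lim_minus f g x a b Ha Hb).
Qed.
Lemma d_plus (f g : R -> R) x a b : is_derive f x a -> is_derive g x b ->
  is_derive (fun t => f t + g t) x (a + b).
Proof.
  intros Ha Hb. apply is_derive_Reals. apply is_derive_Reals in Ha, Hb.
  exact (derivable_pt_lim_plus f g x a b Ha Hb).
Qed.
Lemma d_const (c x : R) : is_derive (fun _ => c) x 0.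
Proof. apply is_derive_Reals. apply derivable_pt_lim_const. Qed.
Lemma d_id (x : R) : is_derive (fun t => t) x 1.
Proof. apply is_derive_Reals. apply derivable_pt_lim_id. Qed.
Lemma d_eq (f : R -> R) (x a b : R) : is_derive f x a -> @eq R a b -> is_derive f x b.
Proof. intros H ->; exact H. Qed.
Lemma d_comp (f g : R -> R) x a b : is_derive g x a -> is_derive f (g x) b ->
  is_derive (fun t => f (g t)) x (b * a).
Proof.
  intros Ha Hb. apply is_derive_Reals. apply is_derive_Reals in Ha, Hb.
  exact (derivable_pt_lim_comp g f x a b Ha Hb).
Qed.

Lemma cont_sq (L : R) : forall t, continuous (fun t => sqrt (L - t ^ 2)) t.
Proof.
  intros t. apply continuous_sqrt_comp.
  apply (ex_derive_continuous (fun t => L - t ^ 2)). auto_derive. auto.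
Qed.

Lemma phi_RInt (n : nat) (x : R) :
  phi n x = RInt (fun t => sqrt (2 * INR n + 1 - t ^ 2)) 0 x.
Proof.
  unfold phi, Rint.
  assert (Hex : ex_RInt (fun t => sqrt (2 * INR n + 1 - t ^ 2)) 0 x).
  { apply (ex_RInt_continuous (V:=R_CompleteNormedModule)). intros; apply cont_sq. }
  pose proof (ex_RInt_Reals_0 _ _ _ Hex) as pr.
  destruct (epsilon_spec (inhabits 0) (fun v => exists pr : Riemann_integrable (fun t => sqrt (2 * INR n + 1 - t ^ 2)) 0 x, RiemannInt pr = v)) as [pr' Hpr'].
  { exists (RiemannInt pr). exists pr. reflexivity. }
  rewrite <- Hpr'. symmetry. apply RInt_Reals.
Qed.

Lemma phi_derive (n : nat) (x : R) :
  is_derive (phi n) x (sqrt (2 * INR n + 1 - x ^ 2)).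
Proof.
  apply is_derive_ext with (f := fun x => RInt (fun t => sqrt (2 * INR n + 1 - t ^ 2)) 0 x).
  { intros; symmetry; apply phi_RInt. }
  apply (is_derive_RInt (fun t => sqrt (2 * INR n + 1 - t ^ 2)) _ 0 x).
  - apply filter_forall. intros b. apply (RInt_correct (V:=R_CompleteNormedModule)). apply (ex_RInt_continuous (V:=R_CompleteNormedModule)). intros; apply cont_sq.
  - apply cont_sq.
Qed.

Lemma phi_0 (n : nat) : phi n 0 = 0.
Proof. rewrite phi_RInt. exact (RInt_point (V:=R_CompleteNormedModule) _ _). Qed.

Definition dH (n : nat) (x : R) : R :=
  match n with O => 0 | S m => 2 * INR (S m) * hermiteH m x end.

Lemma H_rec (k : nat) (x : R) :
  hermiteH (S (S k)) x = 2 * x * hermiteH (S k) x - 2 * INR (S k) * hermiteH k x.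
Proof. reflexivity. Qed.

Lemma dH_id (m : nat) (x : R) : dH m x = 2 * x * hermiteH m x - hermiteH (S m) x.
Proof.
  destruct m as [|k].
  - simpl. ring.
  - rewrite H_rec. unfold dH. ring.
Qed.

Lemma H_deriv_pair (k : nat) (x : R) :
  is_derive (hermiteH k) x (dH k x) /\ is_derive (hermiteH (S k)) x (dH (S k) x).
Proof.
  induction k as [|k [IH1 IH2]].
  - split.
    + simpl. apply d_const.
    + simpl. eapply d_eq. apply d_mult. apply d_const. apply d_id. simpl. ring.
  - split; [exact IH2|].
    apply is_derive_ext with (f := fun x => 2 * x * hermiteH (S k) x - 2 * INR (S k) * hermiteH k x).
    { intros; symmetry; apply H_rec. }
    eapply d_eq.
    + apply d_minus.
      * apply d_mult. apply d_mult. apply d_const. apply d_id. exact IH2.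
      * apply d_mult. apply d_const. exact IH1.
    + replace (dH (S (S k)) x) with (2 * INR (S (S k)) * hermiteH (S k) x) by reflexivity.
      replace (dH (S k) x) with (2 * INR (S k) * hermiteH k x) by reflexivity.
      destruct k as [|j]. { simpl. ring. } change (dH (S j) x) with (2 * INR (S j) * hermiteH j x). rewrite (H_rec j x). rewrite !S_INR. ring.
Qed.

Lemma H_deriv (n : nat) (x : R) : is_derive (hermiteH n) x (dH n x).
Proof. apply H_deriv_pair. Qed.

Lemma dH_deriv (n : nat) (x : R) :
  is_derive (dH n) x (2 * x * dH n x - 2 * INR n * hermiteH n x).
Proof.
  destruct n as [|m].
  - simpl. eapply d_eq. apply d_const. ring.
  - apply is_derive_ext with (f := fun x => 2 * INR (S m) * hermiteH m x). { reflexivity. }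
    eapply d_eq. apply d_mult. apply d_const. apply H_deriv.
    cbv beta. rewrite (dH_id m x). change (dH (S m) x) with (2 * INR (S m) * hermiteH m x). ring.
Qed.

Definition Kn (n : nat) : R := / (Rpower PI (1/4) * sqrt (2 ^ n * INR (fact n))).

Definition dh (n : nat) (x : R) : R := Kn n * (dH n x - x * hermiteH n x) * exp (- x ^ 2 / 2).

Lemma h_deriv (n : nat) (x : R) : is_derive (hermite_fun n) x (dh n x).
Proof.
  unfold hermite_fun, dh. fold (Kn n).
  eapply d_eq.
  - apply d_mult. apply d_mult. apply d_const. apply H_deriv.
    apply (d_comp exp (fun x => - x ^ 2 / 2)).
    + auto_derive. auto. reflexivity.
    + apply is_derive_Reals. apply derivable_pt_lim_exp.
  - cbv beta. field.
Qed.

Lemma dh_deriv (n : nat) (x : R) :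
  is_derive (dh n) x (- (2 * INR n + 1 - x ^ 2) * hermite_fun n x).
Proof.
  unfold hermite_fun, dh. fold (Kn n).
  eapply d_eq.
  - apply d_mult. apply d_mult. apply d_const. apply d_minus. apply dH_deriv.
    apply d_mult. apply d_id. apply H_deriv.
    apply (d_comp exp (fun x => - x ^ 2 / 2)).
    + auto_derive. auto. reflexivity.
    + apply is_derive_Reals. apply derivable_pt_lim_exp.
  - cbv beta. field.
Qed.

Definition W (n : nat) : R := RInt (fun t => sin t ^ n) 0 (PI / 2).

Lemma cont_sinpow (n : nat) (t : R) : continuous (fun t => sin t ^ n) t.
Proof. apply (ex_derive_continuous (fun t => sin t ^ n)). auto_derive. auto. Qed.

Lemma is_RInt_W (n : nat) : is_RInt (fun t => sin t ^ n) 0 (PI / 2) (W n).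
Proof.
  apply (RInt_correct (V:=R_CompleteNormedModule)).
  apply (ex_RInt_continuous (V:=R_CompleteNormedModule)). intros; apply cont_sinpow.
Qed.

Lemma W_rec (n : nat) : (INR n + 2) * W (S (S n)) = (INR n + 1) * W n.
Proof.
  assert (H1 := is_RInt_scal _ _ _ (INR n + 2) _ (is_RInt_W (S (S n)))).
  assert (H2 := is_RInt_scal _ _ _ (INR n + 1) _ (is_RInt_W n)).
  assert (H3 := is_RInt_minus _ _ _ _ _ _ H1 H2).
  assert (H4 : is_RInt (fun t => (INR n + 2) * sin t ^ (S (S n)) - (INR n + 1) * sin t ^ n) 0 (PI/2)
     (minus ((fun t => - cos t * sin t ^ (S n)) (PI/2)) ((fun t => - cos t * sin t ^ (S n)) 0))).
  { apply (is_RInt_derive (V:=R_CompleteNormedModule) (fun t => - cos t * sin t ^ (S n))).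
    - intros x _. auto_derive. auto.
      change (match n with 0%nat => 1 | S _ => INR n + 1 end) with (INR (S n)). rewrite S_INR.
      assert (Hc : cos x ^ 2 + sin x ^ 2 - 1 = 0) by (rewrite <- (sin2_cos2 x); unfold Rsqr; ring).
      transitivity ((INR n + 2) * sin x ^ S (S n) - (INR n + 1) * sin x ^ n + (-(INR n+1)*sin x^n)*(cos x^2 + sin x^2 - 1)).
      + simpl. ring.
      + rewrite Hc. ring.
    - intros x _. apply (ex_derive_continuous (fun t => (INR n + 2) * sin t ^ (S (S n)) - (INR n + 1) * sin t ^ n)).
      auto_derive. auto. }
  apply (is_RInt_unique (V:=R_CompleteNormedModule)) in H3. apply (is_RInt_unique (V:=R_CompleteNormedModule)) in H4.
  match type of H3 with RInt ?f3 _ _ = ?v3 => match type of H4 with RInt ?f4 _ _ = ?v4 =>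
    assert (E : v3 = v4) by (rewrite <- H3, <- H4; apply RInt_ext; intros; reflexivity) end end.
  clear H1 H2 H3 H4. rename E into H3. cbv beta in H3.
  rewrite cos_PI2, sin_0 in H3. unfold minus, plus, opp, scal in H3. simpl in H3.
  unfold mult in H3; simpl in H3. unfold Rminus. 
  revert H3. simpl. intros H3. lra.
Qed.

Lemma W_0 : W 0 = PI / 2.
Proof.
  unfold W. simpl. rewrite (RInt_const (V:=R_CompleteNormedModule)).
  unfold scal; simpl. unfold mult; simpl. ring.
Qed.

Lemma W_1 : W 1 = 1.
Proof.
  unfold W.
  apply (is_RInt_unique (V:=R_CompleteNormedModule)).
  replace 1 with (minus ((fun t => - cos t) (PI/2)) ((fun t => - cos t) 0)).
  - apply (is_RInt_derive (V:=R_CompleteNormedModule) (fun t => - cos t)).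
    + intros x _. auto_derive. auto. ring.
    + intros x _. apply (ex_derive_continuous (fun t => sin t ^ 1)). auto_derive. auto.
  - cbv beta. rewrite cos_PI2, cos_0. unfold minus, plus, opp; simpl. ring.
Qed.

Lemma W_decr (n : nat) : W (S n) <= W n.
Proof.
  unfold W. apply RInt_le.
  - left; apply PI2_RGT_0.
  - apply (ex_RInt_continuous (V:=R_CompleteNormedModule)). intros; apply cont_sinpow.
  - apply (ex_RInt_continuous (V:=R_CompleteNormedModule)). intros; apply cont_sinpow.
  - intros x Hx. simpl.
    assert (0 <= sin x) by (apply sin_ge_0; pose proof PI_RGT_0; lra).
    assert (sin x <= 1) by apply (proj2 (SIN_bound x)).
    assert (0 <= sin x ^ n) by (apply pow_le; lra).
    nra.
Qed.

Fixpoint bb (p : nat) : R :=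
  match p with O => 1 | S q => bb q * (2 * INR q + 1) / (2 * INR q + 2) end.

Lemma bb_pos (p : nat) : 0 < bb p.
Proof.
  induction p; simpl. lra.
  pose proof (pos_INR p). apply Rmult_lt_0_compat. apply Rmult_lt_0_compat; lra.
  apply Rinv_0_lt_compat; lra.
Qed.

Lemma W_even_odd (p : nat) : W (2 * p) = bb p * (PI / 2) /\ W (S (2 * p)) * ((2 * INR p + 1) * bb p) = 1.
Proof.
  induction p as [|p [IH1 IH2]].
  - simpl. rewrite W_0, W_1. split; ring.
  - replace (2 * S p)%nat with (S (S (2 * p))) by lia.
    pose proof (W_rec (2 * p)) as R1. pose proof (W_rec (S (2 * p))) as R2.
    rewrite mult_INR in R1. rewrite S_INR, mult_INR in R2. replace (INR 2) with 2 in R1, R2 by (simpl; ring).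
    pose proof (pos_INR p).
    rewrite S_INR. simpl bb. split.
    + apply (Rmult_eq_reg_l (2 * INR p + 2)); [|lra].
      rewrite R1, IH1. field. lra.
    + assert (E : W (S (S (S (2 * p)))) = (2 * INR p + 2) / (2 * INR p + 3) * W (S (2 * p))).
      { apply (Rmult_eq_reg_l (2 * INR p + 3)); [|lra]. replace (2 * INR p + 3) with (2 * INR p + 1 + 2) by ring. rewrite R2. field. lra. }
      rewrite E. transitivity (W (S (2*p)) * ((2*INR p+1)*bb p)); [field; lra | exact IH2].
Qed.

Lemma wallis_bounds (p : nat) :
  INR p / (INR p + 1/2) <= bb p ^ 2 * PI * INR p <= 1.
Proof.
  pose proof (W_even_odd p) as [E1 E2]. pose proof (bb_pos p). pose proof (pos_INR p).
  pose proof PI_RGT_0.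
  split.
  - pose proof (W_decr (2 * p)) as D. rewrite E1 in D.
    assert (W (S (2 * p)) = / ((2 * INR p + 1) * bb p)) as E3.
    { apply (Rmult_eq_reg_r ((2 * INR p + 1) * bb p)). rewrite E2. field. split; lra. nra. }
    rewrite E3 in D.
    apply Rmult_le_reg_r with (r := 2 * INR p + 1). lra.
    assert (1 <= bb p * (PI / 2) * ((2 * INR p + 1) * bb p)).
    { apply Rmult_le_reg_r with (r := / ((2 * INR p + 1) * bb p)).
      apply Rinv_0_lt_compat. nra.
      rewrite Rmult_assoc, Rinv_r, Rmult_1_r, Rmult_1_l. exact D. nra. }
    replace (INR p / (INR p + 1 / 2) * (2 * INR p + 1)) with (2 * INR p) by (field; lra).
    nra.
  - destruct p as [|q]. { simpl. lra. }
    pose proof (W_decr (S (2 * q))) as D.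
    replace (S (S (2 * q))) with (2 * S q)%nat in D by lia.
    rewrite E1 in D. destruct (W_even_odd q) as [_ F2].
    simpl bb. simpl bb in D. rewrite S_INR in *.
    pose proof (bb_pos q). pose proof (pos_INR q).
    assert (W (S (2 * q)) = / ((2 * INR q + 1) * bb q)) as E3.
    { apply (Rmult_eq_reg_r ((2 * INR q + 1) * bb q)). rewrite F2. field. split; lra. nra. }
    rewrite E3 in D.
    set (b := bb q) in *. set (m := INR q) in *.
    assert (Hb: b * (2 * m + 1) / (2 * m + 2) * (PI / 2) * ((2 * m + 1) * b) <= 1).
    { apply Rmult_le_reg_r with (r := / ((2 * m + 1) * b)).
      apply Rinv_0_lt_compat. nra.
      rewrite Rmult_assoc, Rinv_r, Rmult_1_r, Rmult_1_l. exact D. nra. }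
    replace ((b * (2 * m + 1) / (2 * m + 2)) ^ 2 * PI * (m + 1))
      with (b * (2 * m + 1) / (2 * m + 2) * (PI / 2) * ((2 * m + 1) * b)) by (field; lra).
    exact Hb.
Qed.

Lemma cont_of_der (f : R -> R) x l : is_derive f x l -> continuity_pt f x.
Proof.
  intros H. apply continuity_pt_filterlim. apply (ex_derive_continuous (V:=R_NormedModule)). exists l; exact H.
Qed.

Section En.
Variables (e de f : R -> R) (L T M : R).
Hypothesis He : forall x, -T <= x <= T -> is_derive e x (de x).
Hypothesis Hde : forall x, -T <= x <= T -> is_derive de x (f x - (L - x^2) * e x).
Hypothesis Hf : forall x, -T <= x <= T -> Rabs (f x) <= M.
Hypothesis HL : forall x, -T <= x <= T -> 0 <= L - x ^ 2.
Hypothesis He0 : e 0 = 0.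
Hypothesis Hde0 : de 0 = 0.

Definition En (x : R) := de x ^ 2 + (L - x ^ 2) * e x ^ 2.

Lemma En_der (x : R) : -T <= x <= T ->
  is_derive En x (2 * de x * f x - 2 * x * e x ^ 2).
Proof.
  intros Hx. unfold En. eapply d_eq.
  - apply d_plus.
    + apply (d_comp (fun y => y ^ 2) de). apply Hde; exact Hx.
      auto_derive. auto. reflexivity.
    + apply d_mult. apply d_minus. apply d_const. apply (d_comp (fun y => y ^ 2) (fun t => t)).
      apply d_id. auto_derive. auto. reflexivity.
      apply (d_comp (fun y => y ^ 2) e). apply He; exact Hx.
      auto_derive. auto. reflexivity.
  - simpl. ring.
Qed.

Lemma En_nonneg (x : R) : -T <= x <= T -> 0 <= En x.
Proof. intros Hx. unfold En. pose proof (HL x Hx). nra. Qed.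

Lemma de_le (x : R) (d : R) : -T <= x <= T -> 0 < d -> Rabs (de x) <= sqrt (En x + d).
Proof.
  intros Hx Hd. rewrite <- sqrt_Rsqr_abs. apply sqrt_le_1_alt.
  unfold En, Rsqr. pose proof (HL x Hx). nra.
Qed.

Lemma F_der (d x : R) (s : R) : 0 < d -> -T <= x <= T ->
  is_derive (fun t => sqrt (En t + d) + s * t) x
   ((2 * de x * f x - 2 * x * e x ^ 2) * / (2 * sqrt (En x + d)) + s).
Proof.
  intros Hd Hx. eapply d_eq.
  - apply d_plus.
    + apply (d_comp sqrt (fun t => En t + d)).
      * apply d_plus. apply En_der; exact Hx. apply d_const.
      * apply is_derive_Reals. apply derivable_pt_lim_sqrt. pose proof (En_nonneg x Hx). lra.
    + apply d_mult. apply d_const. apply d_id.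
  - cbv beta. ring.
Qed.

Lemma energy_delta (d x : R) : 0 < d -> -T <= x <= T ->
  sqrt (En x + d) <= sqrt d + Rabs x * M.
Proof.
  intros Hd Hx.
  assert (HM : 0 <= M). { assert (-T <= 0 <= T) by lra. pose proof (Hf 0 H). pose proof (Rabs_pos (f 0)). lra. }
  assert (E0 : En 0 = 0). { unfold En. rewrite He0, Hde0. ring. }
  destruct (Rle_or_lt 0 x) as [Hx0|Hx0].
  - destruct (MVT_gen (fun t => sqrt (En t + d) + (-M) * t) 0 x
      (fun x => (2 * de x * f x - 2 * x * e x ^ 2) * / (2 * sqrt (En x + d)) + - M)) as [c [Hc Hmv]].
    + intros y Hy. rewrite Rmin_left, Rmax_right in Hy by lra. apply F_der; [exact Hd| lra].
    + intros y Hy. rewrite Rmin_left, Rmax_right in Hy by lra. eapply cont_of_der. apply F_der; [exact Hd| lra].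
    + rewrite Rmin_left, Rmax_right in Hc by lra.
      assert (Hc' : -T <= c <= T) by lra.
      pose proof (de_le c d Hc' Hd) as Hdl. pose proof (Hf c Hc') as Hfc.
      pose proof (En_nonneg c Hc').
      set (s := sqrt (En c + d)) in *.
      assert (Hs : 0 < s) by (apply sqrt_lt_R0; lra).
      assert (Hd2 : (2 * de c * f c - 2 * c * e c ^ 2) <= 2 * s * M).
      { assert (2 * de c * f c <= 2 * Rabs (de c) * Rabs (f c)).
        { pose proof (Rle_abs (de c * f c)) as Hq. rewrite Rabs_mult in Hq. lra. }
        assert (0 <= c * e c ^ 2) by (apply Rmult_le_pos; [lra | apply pow2_ge_0]).
        pose proof (Rabs_pos (de c)). pose proof (Rabs_pos (f c)). nra. }
      assert (Hneg : (2 * de c * f c - 2 * c * e c ^ 2) * / (2 * s) + - M <= 0).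
      { apply Rle_trans with (2 * s * M * / (2 * s) + - M).
        - apply Rplus_le_compat_r. apply Rmult_le_compat_r. left; apply Rinv_0_lt_compat; lra. exact Hd2.
        - right. field. lra. }
      rewrite E0 in Hmv. rewrite Rplus_0_l in Hmv.
      rewrite Rabs_right by lra. nra.
  - destruct (MVT_gen (fun t => sqrt (En t + d) + M * t) x 0
      (fun x => (2 * de x * f x - 2 * x * e x ^ 2) * / (2 * sqrt (En x + d)) + M)) as [c [Hc Hmv]].
    + intros y Hy. rewrite Rmin_left, Rmax_right in Hy by lra. apply F_der; [exact Hd| lra].
    + intros y Hy. rewrite Rmin_left, Rmax_right in Hy by lra. eapply cont_of_der. apply F_der; [exact Hd| lra].
    + rewrite Rmin_left, Rmax_right in Hc by lra.
      assert (Hc' : -T <= c <= T) by lra.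
      pose proof (de_le c d Hc' Hd) as Hdl. pose proof (Hf c Hc') as Hfc.
      pose proof (En_nonneg c Hc').
      set (s := sqrt (En c + d)) in *.
      assert (Hs : 0 < s) by (apply sqrt_lt_R0; lra).
      assert (Hd2 : -(2 * s * M) <= (2 * de c * f c - 2 * c * e c ^ 2)).
      { assert (- (2 * Rabs (de c) * Rabs (f c)) <= 2 * de c * f c).
        { pose proof (Rle_abs (- (de c * f c))) as Hq. rewrite Rabs_Ropp, Rabs_mult in Hq. lra. }
        assert (c * e c ^ 2 <= 0).
        { pose proof (pow2_ge_0 (e c)). nra. }
        pose proof (Rabs_pos (de c)). pose proof (Rabs_pos (f c)). nra. }
      assert (Hpos : 0 <= (2 * de c * f c - 2 * c * e c ^ 2) * / (2 * s) + M).
      { apply Rle_trans with (-(2 * s * M) * / (2 * s) + M).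
        - right. field. lra.
        - apply Rplus_le_compat_r. apply Rmult_le_compat_r. left; apply Rinv_0_lt_compat; lra. exact Hd2. }
      rewrite E0 in Hmv. rewrite Rplus_0_l in Hmv.
      rewrite Rabs_left by lra. nra.
Qed.

Lemma energy (x : R) : -T <= x <= T -> En x <= (x * M) ^ 2.
Proof.
  intros Hx.
  assert (HM : 0 <= M). { assert (-T <= 0 <= T) by lra. pose proof (Hf 0 H). pose proof (Rabs_pos (f 0)). lra. }
  pose proof (En_nonneg x Hx).
  set (a := Rabs x * M).
  assert (Ha : 0 <= a) by (apply Rmult_le_pos; [apply Rabs_pos | exact HM]).
  assert (Hsq : (x * M) ^ 2 = a ^ 2) by (unfold a; rewrite !Rpow_mult_distr, pow2_abs; reflexivity).
  rewrite Hsq.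
  destruct (Rle_or_lt (En x) (a ^ 2)) as [Hle|Hlt]; [exact Hle|].
  exfalso.
  set (D := En x - a ^ 2).
  assert (HD : 0 < D) by (unfold D; lra).
  set (r := D / (4 * a + 4)).
  assert (Hr : 0 < r) by (unfold r; apply Rdiv_lt_0_compat; lra).
  pose proof (energy_delta (r ^ 2) x (pow_lt r 2 Hr) Hx) as Hed.
  rewrite sqrt_pow2 in Hed by lra.
  fold a in Hed.
  assert (Hs : 0 <= sqrt (En x + r ^ 2)) by apply sqrt_pos.
  assert (Hsq2 : sqrt (En x + r ^ 2) ^ 2 = En x + r ^ 2).
  { rewrite <- Rsqr_pow2. apply Rsqr_sqrt. pose proof (pow2_ge_0 r). lra. }
  assert (En x + r ^ 2 <= (r + a) ^ 2).
  { rewrite <- Hsq2. apply pow_incr. split; lra. }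
  assert (Hra : r * (4 * a + 4) = D) by (unfold r; field; lra).
  assert (0 <= r * a) by (apply Rmult_le_pos; lra).
  unfold D in Hra. nra.
Qed.
End En.

Lemma pow4_le (a b : R) : 0 <= a -> 0 <= b -> a ^ 4 <= b ^ 4 -> a <= b.
Proof.
  intros Ha Hb H. destruct (Rle_or_lt a b) as [|Hlt]; [assumption|exfalso].
  assert (b ^ 2 < a ^ 2) by (simpl; nra).
  assert (b ^ 4 < a ^ 4).
  { replace (b ^ 4) with ((b ^ 2) ^ 2) by ring. replace (a ^ 4) with ((a ^ 2) ^ 2) by ring.
    assert (0 <= b ^ 2) by apply pow2_ge_0. simpl. nra. }
  lra.
Qed.

Lemma diff4 (A B : R) : 0 <= A -> 0 < B -> Rabs (A - B) * B ^ 3 <= Rabs (A ^ 4 - B ^ 4).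
Proof.
  intros HA HB.
  replace (A ^ 4 - B ^ 4) with ((A - B) * ((A + B) * (A ^ 2 + B ^ 2))) by ring.
  rewrite Rabs_mult. apply Rmult_le_compat_l. apply Rabs_pos.
  rewrite Rabs_right.
  - assert (0 <= A ^ 2) by apply pow2_ge_0. assert (0 <= A * B ^ 2) by (apply Rmult_le_pos; [lra | apply pow2_ge_0]).
    simpl. nra.
  - apply Rle_ge. apply Rmult_le_pos. lra. assert (0 <= A ^ 2) by apply pow2_ge_0. assert (0 <= B ^ 2) by apply pow2_ge_0. lra.
Qed.

Ltac fin := cbv beta; try change RinvImpl.Rinv with Rinv; match goal with |- ?a = ?b => change (@eq R a b) end.

Section Core.
Variables (T L : R) (h dhf u w : R -> R) (C c : R).
Hypothesis HT : 2 <= T.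
Hypothesis HL : 4 * T ^ 2 + 1 <= L.
Hypothesis Hh : forall x, -T <= x <= T -> is_derive h x (dhf x).
Hypothesis Hdh : forall x, -T <= x <= T -> is_derive dhf x (-(L - x ^ 2) * h x).
Hypothesis Hu : forall x, -T <= x <= T -> is_derive u x (w x * sqrt (L - x ^ 2)).
Hypothesis Hw : forall x, -T <= x <= T -> is_derive w x (- u x * sqrt (L - x ^ 2)).
Hypothesis Huw : forall x, u x ^ 2 + w x ^ 2 = 1.

Definition aa (x : R) := exp (- (1/4) * ln (L - x ^ 2)).
Definition daa (x : R) := aa x * x / (2 * (L - x ^ 2)).
Definition ddaa (x : R) := aa x * (2 * (L - x ^ 2) + 5 * x ^ 2) / (4 * (L - x ^ 2) ^ 2).

Lemma q_lb (x : R) : -T <= x <= T -> 3 * L / 4 <= L - x ^ 2 /\ x ^ 2 <= T ^ 2.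
Proof.
  intros Hx. assert (x ^ 2 <= T ^ 2) by (simpl; nra). split; [nra|exact H].
Qed.

Lemma q_pos (x : R) : -T <= x <= T -> 0 < L - x ^ 2.
Proof. intros Hx. destruct (q_lb x Hx). nra. Qed.

Lemma aa_der (x : R) : -T <= x <= T -> is_derive aa x (daa x).
Proof.
  intros Hx. pose proof (q_pos x Hx). unfold aa, daa. auto_derive.
  - lra.
  - unfold aa. change RinvImpl.Rinv with Rinv. replace (L + - (x * (x * 1))) with (L - x ^ 2) by ring. field. lra.
Qed.

Lemma rat_der (x : R) : -T <= x <= T ->
  is_derive (fun t => t / (2 * (L - t ^ 2))) x ((L - x ^ 2 + 2 * x ^ 2) / (2 * (L - x ^ 2) ^ 2)).
Proof.
  intros Hx. pose proof (q_pos x Hx). auto_derive.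
  - lra.
  - change RinvImpl.Rinv with Rinv. field. lra.
Qed.

Lemma daa_der (x : R) : -T <= x <= T -> is_derive daa x (ddaa x).
Proof.
  intros Hx. pose proof (q_pos x Hx).
  apply is_derive_ext with (f := fun t => aa t * (t / (2 * (L - t ^ 2)))).
  { intros t. unfold daa. match goal with |- ?a = ?b => change (@eq R a b) end. unfold Rdiv. ring. }
  eapply d_eq. apply d_mult. apply aa_der; exact Hx. apply rat_der; exact Hx.
  unfold daa, ddaa. field. lra.
Qed.

Lemma aa_pos (x : R) : 0 < aa x.
Proof. apply exp_pos. Qed.

Lemma aa4 (x : R) : -T <= x <= T -> aa x ^ 4 * (L - x ^ 2) = 1.
Proof.
  intros Hx. pose proof (q_pos x Hx). unfold aa.
  set (z := - (1 / 4) * ln (L - x ^ 2)).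
  replace (exp z ^ 4 * (L - x ^ 2)) with (exp z * exp z * exp z * exp z * exp (ln (L - x ^ 2))) by (rewrite exp_ln by lra; ring).
  rewrite <- !exp_plus. rewrite <- exp_0. f_equal. unfold z. field.
Qed.

Lemma sq_der (x : R) : -T <= x <= T -> is_derive (fun t => sqrt (L - t ^ 2)) x (- x / sqrt (L - x ^ 2)).
Proof.
  intros Hx. pose proof (q_pos x Hx).
  eapply d_eq. apply (d_comp sqrt (fun t => L - t ^ 2)).
  - auto_derive. auto. reflexivity.
  - apply is_derive_Reals. apply derivable_pt_lim_sqrt. lra.
  - assert (0 < sqrt (L - x ^ 2)) by (apply sqrt_lt_R0; lra). field. lra.
Qed.

Definition gg (x : R) := C * aa x * u x.
Definition dgg (x : R) := C * (daa x * u x + aa x * w x * sqrt (L - x ^ 2)).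

Lemma gg_der (x : R) : -T <= x <= T -> is_derive gg x (dgg x).
Proof.
  intros Hx. unfold gg, dgg. eapply d_eq.
  - apply d_mult. apply d_mult. apply d_const. apply aa_der; exact Hx. apply Hu; exact Hx.
  - fin. ring.
Qed.

Lemma dgg_der (x : R) : -T <= x <= T ->
  is_derive dgg x (C * ddaa x * u x - (L - x ^ 2) * gg x).
Proof.
  intros Hx. pose proof (q_pos x Hx).
  assert (Hs : 0 < sqrt (L - x ^ 2)) by (apply sqrt_lt_R0; lra).
  assert (Hs2 : sqrt (L - x ^ 2) * sqrt (L - x ^ 2) = L - x ^ 2) by (apply sqrt_sqrt; lra).
  unfold dgg, gg. eapply d_eq.
  - apply d_mult. apply d_const. apply d_plus.
    + apply d_mult. apply daa_der; exact Hx. apply Hu; exact Hx.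
    + apply d_mult. apply d_mult. apply aa_der; exact Hx. apply Hw; exact Hx. apply sq_der; exact Hx.
  - unfold daa, ddaa. fin.
    set (s := sqrt (L - x ^ 2)) in *. rewrite <- Hs2. field. lra.
Qed.
End Core.

Section Core2.
Variables (T L : R) (h dhf u w : R -> R) (C c : R).
Hypothesis HT : 2 <= T.
Hypothesis HL : 4 * T ^ 2 + 1 <= L.
Hypothesis Hh : forall x, -T <= x <= T -> is_derive h x (dhf x).
Hypothesis Hdh : forall x, -T <= x <= T -> is_derive dhf x (-(L - x ^ 2) * h x).
Hypothesis Hu : forall x, -T <= x <= T -> is_derive u x (w x * sqrt (L - x ^ 2)).
Hypothesis Hw : forall x, -T <= x <= T -> is_derive w x (- u x * sqrt (L - x ^ 2)).
Hypothesis Huw : forall x, u x ^ 2 + w x ^ 2 = 1.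
Hypothesis Hinit0 : h 0 = gg L u C 0.
Hypothesis Hinit1 : dhf 0 = dgg L u w C 0.
Hypothesis HCc : 0 <= C * c.
Hypothesis Hc : c <> 0.
Hypothesis Hi : forall x, -T <= x <= T -> Rabs (C ^ 4 / (L - x ^ 2) - c ^ 4) <= 4 * T ^ 2 / (3 * L) * c ^ 4.
Hypothesis Hii : c ^ 4 * L <= 55 / 100.

Let B := Rabs c.
Let kk := 4 * T ^ 2 / (3 * L).

Lemma B_pos : 0 < B.
Proof. apply Rabs_pos_lt. exact Hc. Qed.

Lemma L_pos : 17 <= L.
Proof. nra. Qed.

Lemma kk_le : kk <= 1 / 3.
Proof. unfold kk. pose proof L_pos. apply Rmult_le_reg_r with (r := 3 * L). lra. field_simplify; lra. Qed.

Lemma A4 (x : R) : -T <= x <= T -> (Rabs C * aa L x) ^ 4 = C ^ 4 / (L - x ^ 2).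
Proof.
  intros Hx. pose proof (q_pos T L HT HL x Hx). pose proof (aa4 T L HT HL x Hx).
  rewrite Rpow_mult_distr.
  replace (Rabs C ^ 4) with ((Rabs C ^ 2) ^ 2) by ring. rewrite pow2_abs.
  apply (Rmult_eq_reg_r (L - x ^ 2)); [|lra].
  replace ((C ^ 2) ^ 2 * aa L x ^ 4 * (L - x ^ 2)) with (C ^ 4 * (aa L x ^ 4 * (L - x ^ 2))) by ring.
  rewrite H0. field. lra.
Qed.

Lemma c4 : c ^ 4 = B ^ 4.
Proof. unfold B. replace (Rabs c ^ 4) with ((Rabs c ^ 2) ^ 2) by ring. rewrite pow2_abs. ring. Qed.

Lemma A_le (x : R) : -T <= x <= T -> Rabs C * aa L x <= 11 / 10 * B.
Proof.
  intros Hx. pose proof B_pos. pose proof kk_le. pose proof (aa_pos L x).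
  apply pow4_le.
  - apply Rmult_le_pos. apply Rabs_pos. lra.
  - lra.
  - rewrite A4 by exact Hx. pose proof (Hi x Hx) as Hix. fold kk in Hix. rewrite c4 in Hix.
    apply Rabs_le_between in Hix. destruct Hix as [_ Hix].
    assert (0 <= B ^ 4) by (apply pow_le; lra).
    rewrite Rpow_mult_distr. nra.
Qed.

Lemma Cdiff (x : R) : -T <= x <= T -> Rabs (C * aa L x - c) <= kk * B.
Proof.
  intros Hx. pose proof B_pos as HB. pose proof (aa_pos L x).
  assert (E : Rabs (C * aa L x - c) = Rabs (Rabs C * aa L x - B)).
  { unfold B. destruct (Rcase_abs C) as [HC|HC]; destruct (Rcase_abs c) as [Hc'|Hc'].
    - rewrite (Rabs_left C), (Rabs_left c) by lra.
      replace (- C * aa L x - - c) with (- (C * aa L x - c)) by ring. symmetry; apply Rabs_Ropp.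
    - assert (c = 0 \/ 0 < c) as [|] by lra; [contradiction|]. nra.
    - assert (C = 0 \/ 0 < C) as [HC0|HC0] by lra.
      + subst C. rewrite Rabs_R0, (Rabs_left c) by lra.
        replace (0 * aa L x - - c) with (- (0 * aa L x - c)) by ring. rewrite Rabs_Ropp. reflexivity.
      + nra.
    - rewrite (Rabs_right C), (Rabs_right c) by lra. reflexivity. }
  rewrite E.
  pose proof (diff4 (Rabs C * aa L x) B) as D.
  assert (0 <= Rabs C * aa L x) by (apply Rmult_le_pos; [apply Rabs_pos|lra]).
  specialize (D H0 HB).
  rewrite A4 in D by exact Hx. rewrite <- c4 in D.
  pose proof (Hi x Hx) as Hix. fold kk in Hix. rewrite c4 in Hix, D.
  assert (HB3 : 0 < B ^ 3) by (apply pow_lt; lra).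
  apply Rmult_le_reg_r with (r := B ^ 3). exact HB3.
  replace (kk * B * B ^ 3) with (kk * B ^ 4) by ring. lra.
Qed.

Let M := 16 / 10 * B / L.

Lemma f_bound (x : R) : -T <= x <= T -> Rabs (- (C * ddaa L x * u x)) <= M.
Proof.
  intros Hx. pose proof (A_le x Hx) as HA. pose proof (q_lb T L HL x Hx) as [Hq Hx2].
  pose proof L_pos. pose proof B_pos. pose proof (aa_pos L x).
  assert (Hu1 : Rabs (u x) <= 1).
  { pose proof (Huw x). pose proof (pow2_ge_0 (w x)). rewrite <- (Rabs_R1). apply Rsqr_le_abs_0. unfold Rsqr. simpl in *. lra. }
  rewrite Rabs_Ropp. unfold ddaa.
  set (q := L - x ^ 2) in *.
  assert (Hr : 0 <= (2 * q + 5 * x ^ 2) / (4 * q ^ 2) <= 13 / (9 * L)).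
  { split.
    - apply Rdiv_le_0_compat. pose proof (pow2_ge_0 x). nra. apply Rmult_lt_0_compat. lra. apply pow_lt; lra.
    - apply Rmult_le_reg_r with (r := 4 * q ^ 2 * (9 * L)). apply Rmult_lt_0_compat. apply Rmult_lt_0_compat. lra. apply pow_lt; lra. lra.
      field_simplify; [|lra|lra].
      assert (T ^ 2 <= L / 4) by lra. assert (q <= L) by (unfold q; pose proof (pow2_ge_0 x); lra).
      simpl. nra. }
  replace (C * (aa L x * (2 * q + 5 * x ^ 2) / (4 * q ^ 2)) * u x)
    with ((C * aa L x) * ((2 * q + 5 * x ^ 2) / (4 * q ^ 2)) * u x) by (field; lra).
  rewrite !Rabs_mult. rewrite (Rabs_right (aa L x)) by lra.
  rewrite (Rabs_right ((2 * q + 5 * x ^ 2) / (4 * q ^ 2))) by lra.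
  unfold M.
  assert (0 <= Rabs C * aa L x) by (apply Rmult_le_pos; [apply Rabs_pos|lra]).
  apply Rle_trans with (11 / 10 * B * (13 / (9 * L)) * 1).
  - apply Rmult_le_compat. apply Rmult_le_pos; lra. apply Rabs_pos.
    apply Rmult_le_compat; lra. exact Hu1.
  - apply Rmult_le_reg_r with (r := 9 * L). lra. field_simplify; lra.
Qed.


Let ee := fun x => h x - gg L u C x.
Let dee := fun x => dhf x - dgg L u w C x.
Let ff := fun x => - (C * ddaa L x * u x).

Lemma en_bound (x : R) : -T <= x <= T -> dee x ^ 2 + (L - x ^ 2) * ee x ^ 2 <= (x * M) ^ 2.
Proof.
  intros Hx.
  apply (energy ee dee ff L T M).
  - intros y Hy. unfold ee, dee. apply d_minus. apply Hh; exact Hy. apply gg_der with T; auto.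
  - intros y Hy. unfold ee, dee, ff. eapply d_eq. apply d_minus. apply Hdh; exact Hy.
    apply dgg_der with T; auto. ring.
  - intros y Hy. apply f_bound; exact Hy.
  - intros y Hy. left. apply (q_pos T L HT HL y Hy).
  - unfold ee. rewrite Hinit0. ring.
  - unfold dee. rewrite Hinit1. ring.
  - exact Hx.
Qed.

Lemma ee_bound (x : R) : -T <= x <= T -> Rabs (ee x) <= 3 / 10 * T ^ 2 * B / L.
Proof.
  intros Hx. pose proof (en_bound x Hx) as HE. pose proof (q_lb T L HL x Hx) as [Hq Hx2].
  pose proof L_pos. pose proof B_pos.
  assert (HdM : 0 <= dee x ^ 2) by apply pow2_ge_0.
  assert (Hxm : (x * M) ^ 2 <= T ^ 2 * M ^ 2) by (rewrite Rpow_mult_distr; apply Rmult_le_compat_r; [apply pow2_ge_0|lra]).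
  assert (He2 : (3 * L / 4) * ee x ^ 2 <= T ^ 2 * M ^ 2).
  { pose proof (pow2_ge_0 (ee x)). nra. }
  set (X := 3 / 10 * T ^ 2 * B / L).
  assert (HX : 0 <= X) by (unfold X; pose proof (pow2_ge_0 T); apply Rdiv_le_0_compat; [|lra]; apply Rmult_le_pos; [|lra]; nra).
  assert (H1 : ee x ^ 2 <= 4 * T ^ 2 * M ^ 2 / (3 * L)).
  { apply Rmult_le_reg_l with (r := 3 * L / 4). lra. replace (3 * L / 4 * (4 * T ^ 2 * M ^ 2 / (3 * L))) with (T ^ 2 * M ^ 2) by (field; lra). lra. }
  assert (H2 : 4 * T ^ 2 * M ^ 2 / (3 * L) <= X ^ 2).
  { replace (4 * T ^ 2 * M ^ 2 / (3 * L)) with (T ^ 2 * B ^ 2 / L ^ 2 * (256 / 100 * 4 / (3 * L))) by (unfold M; field; lra).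
    replace (X ^ 2) with (T ^ 2 * B ^ 2 / L ^ 2 * (9 / 100 * T ^ 2)) by (unfold X; field; lra).
    apply Rmult_le_compat_l.
    - apply Rdiv_le_0_compat. apply Rmult_le_pos; apply pow2_ge_0. apply pow_lt; lra.
    - apply Rmult_le_reg_r with (r := 3 * L). lra. field_simplify; [|lra]. simpl. nra. }
  rewrite <- (Rabs_right X) by lra. apply Rsqr_le_abs_0. unfold Rsqr. simpl in H1, H2. lra.
Qed.

Lemma dee_bound (x : R) : -T <= x <= T -> Rabs (dee x) <= T * M.
Proof.
  intros Hx. pose proof (en_bound x Hx) as HE. pose proof (q_lb T L HL x Hx) as [Hq Hx2].
  pose proof L_pos. pose proof B_pos.
  assert (HM : 0 <= M) by (unfold M; apply Rdiv_le_0_compat; lra).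
  assert (dee x ^ 2 <= T ^ 2 * M ^ 2).
  { pose proof (pow2_ge_0 (ee x)). rewrite Rpow_mult_distr in HE. nra. }
  rewrite <- (Rabs_right (T * M)) by nra. apply Rsqr_le_abs_0. unfold Rsqr. simpl in H1. nra.
Qed.


Lemma u_le1 (x : R) : Rabs (u x) <= 1.
Proof. pose proof (Huw x). pose proof (pow2_ge_0 (w x)). rewrite <- (Rabs_R1). apply Rsqr_le_abs_0. unfold Rsqr. simpl in *. lra. Qed.
Lemma w_le1 (x : R) : Rabs (w x) <= 1.
Proof. pose proof (Huw x). pose proof (pow2_ge_0 (u x)). rewrite <- (Rabs_R1). apply Rsqr_le_abs_0. unfold Rsqr. simpl in *. lra. Qed.

Let ell := Rpower L (1/4).

Lemma ell_facts : 0 < ell /\ ell ^ 4 = L /\ Rpower L (5/4) = L * ell /\ Rpower L (3/4) = ell ^ 3 /\ 1 <= ell.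
Proof.
  pose proof L_pos.
  assert (H0 : 0 < ell) by (unfold ell, Rpower; apply exp_pos).
  assert (H4 : ell ^ 4 = L).
  { unfold ell. rewrite <- Rpower_pow by (unfold Rpower; apply exp_pos). rewrite Rpower_mult.
    replace (1 / 4 * INR 4) with 1 by (simpl; field). apply Rpower_1. lra. }
  repeat split.
  - exact H0.
  - exact H4.
  - replace (5/4) with (1 + 1/4) by field. rewrite Rpower_plus, Rpower_1 by lra. reflexivity.
  - unfold ell. rewrite <- Rpower_pow by (unfold Rpower; apply exp_pos). rewrite Rpower_mult.
    f_equal. simpl. field.
  - apply pow4_le; lra.
Qed.

Lemma Bell : B * ell <= 87 / 100.
Proof.
  destruct ell_facts as [H0 [H4 _]]. pose proof B_pos.
  apply pow4_le. nra. lra. rewrite Rpow_mult_distr, H4, <- c4. lra.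
Qed.

Lemma Et_eq (x : R) : h x - c * u x = ee x + (C * aa L x - c) * u x.
Proof. unfold ee, gg. ring. Qed.

Lemma core_bound (x : R) : -T <= x <= T -> Rabs (h x - c * u x) <= 2 * T ^ 2 / Rpower L (5/4).
Proof.
  intros Hx. destruct ell_facts as [H0 [H4 [H5 [H3 H1]]]]. rewrite H5.
  pose proof L_pos. pose proof B_pos. pose proof Bell.
  rewrite Et_eq.
  apply Rle_trans with (Rabs (ee x) + Rabs (C * aa L x - c) * 1).
  { eapply Rle_trans. apply Rabs_triang. rewrite Rabs_mult. apply Rplus_le_compat_l.
    apply Rmult_le_compat_l. apply Rabs_pos. apply u_le1. }
  pose proof (ee_bound x Hx). pose proof (Cdiff x Hx).
  assert (Hs : 3 / 10 * T ^ 2 * B / L + 4 * T ^ 2 / (3 * L) * B <= 2 * T ^ 2 / (L * ell)).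
  { replace (3 / 10 * T ^ 2 * B / L + 4 * T ^ 2 / (3 * L) * B) with (49 / 30 * T ^ 2 * (B * ell) / (L * ell)) by (field; lra).
    apply Rmult_le_compat_r. left; apply Rinv_0_lt_compat; nra.
    pose proof (pow2_ge_0 T). nra. }
  unfold kk in H8. lra.
Qed.

Lemma Et_der (x : R) : -T <= x <= T ->
  is_derive (fun t => h t - c * u t) x (dee x + C * daa L x * u x + (C * aa L x - c) * (w x * sqrt (L - x ^ 2))).
Proof.
  intros Hx. eapply d_eq. apply d_minus. apply Hh; exact Hx. apply d_mult. apply d_const. apply Hu; exact Hx.
  unfold dee, dgg. ring.
Qed.

Lemma der_bound (x : R) : -T <= x <= T ->
  Rabs (dee x + C * daa L x * u x + (C * aa L x - c) * (w x * sqrt (L - x ^ 2))) <= 3 * T ^ 2 / Rpower L (3/4).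
Proof.
  intros Hx. destruct ell_facts as [H0 [H4 [H5 [H3 H1]]]]. rewrite H3.
  pose proof L_pos. pose proof B_pos. pose proof Bell.
  pose proof (q_lb T L HL x Hx) as [Hq Hx2]. pose proof (q_pos T L HT HL x Hx) as Hqp.
  pose proof (dee_bound x Hx) as D1. pose proof (Cdiff x Hx) as D3. unfold kk in D3.
  pose proof (A_le x Hx) as HA. pose proof (aa_pos L x).
  assert (Hsq : sqrt (L - x ^ 2) <= ell ^ 2).
  { apply pow4_le. apply sqrt_pos. apply pow2_ge_0.
    replace (sqrt (L - x ^ 2) ^ 4) with ((sqrt (L - x ^ 2) * sqrt (L - x ^ 2)) ^ 2) by ring.
    rewrite sqrt_sqrt by lra. replace ((ell ^ 2) ^ 4) with ((ell ^ 4) ^ 2) by ring. rewrite H4.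
    pose proof (pow2_ge_0 x). apply pow_incr. lra. }
  assert (Hxa : Rabs x <= T) by (apply Rabs_le; lra).
  assert (D2 : Rabs (C * daa L x * u x) <= 11 / 10 * B * T / (2 * (3 * L / 4))).
  { unfold daa. rewrite !Rabs_mult.
    replace (Rabs (aa L x * x / (2 * (L - x ^ 2)))) with (aa L x * Rabs x / (2 * (L - x ^ 2))).
    2: { unfold Rdiv. rewrite !Rabs_mult. rewrite Rabs_inv. rewrite (Rabs_right (aa L x)) by lra.
         rewrite (Rabs_right (2 * (L - x ^ 2))) by lra. reflexivity. }
    pose proof (u_le1 x). pose proof (Rabs_pos (u x)). pose proof (Rabs_pos x). pose proof (Rabs_pos C).
    apply Rle_trans with (Rabs C * (aa L x * Rabs x / (2 * (L - x ^ 2)))).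
    { rewrite <- (Rmult_1_r (Rabs C * (aa L x * Rabs x / (2 * (L - x ^ 2))))) at 2.
      apply Rmult_le_compat_l. apply Rmult_le_pos. lra. apply Rdiv_le_0_compat; nra. lra. }
    replace (Rabs C * (aa L x * Rabs x / (2 * (L - x ^ 2)))) with ((Rabs C * aa L x) * Rabs x / (2 * (L - x ^ 2))) by (field; lra).
    apply Rle_trans with ((Rabs C * aa L x) * Rabs x / (2 * (3 * L / 4))).
    - unfold Rdiv. apply Rmult_le_compat_l. apply Rmult_le_pos; nra.
      apply Rinv_le_contravar; lra.
    - unfold Rdiv. apply Rmult_le_compat_r. left; apply Rinv_0_lt_compat; lra.
      apply Rmult_le_compat; nra. }
  assert (D4 : Rabs ((C * aa L x - c) * (w x * sqrt (L - x ^ 2))) <= 4 * T ^ 2 / (3 * L) * B * ell ^ 2).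
  { rewrite !Rabs_mult. pose proof (w_le1 x). rewrite (Rabs_right (sqrt (L - x ^ 2))) by (apply Rle_ge, sqrt_pos).
    pose proof (Rabs_pos (w x)). pose proof (sqrt_pos (L - x ^ 2)). pose proof (Rabs_pos (C * aa L x - c)).
    apply Rle_trans with (Rabs (C * aa L x - c) * (1 * ell ^ 2)).
    - apply Rmult_le_compat_l. lra. apply Rmult_le_compat; lra.
    - rewrite Rmult_1_l. apply Rmult_le_compat_r. apply pow2_ge_0. exact D3. }
  eapply Rle_trans. apply Rabs_triang.
  eapply Rle_trans. apply Rplus_le_compat_r. apply Rabs_triang.
  unfold M in D1.
  assert (Hfin : T * (16 / 10 * B / L) + 11 / 10 * B * T / (2 * (3 * L / 4)) + 4 * T ^ 2 / (3 * L) * B * ell ^ 2 <= 3 * T ^ 2 / ell ^ 3).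
  { replace (3 * T ^ 2 / ell ^ 3) with (3 * T ^ 2 * ell / L) by (rewrite <- H4; field; lra).
    apply Rmult_le_reg_r with (r := L * ell). nra.
    replace ((T * (16 / 10 * B / L) + 11 / 10 * B * T / (2 * (3 * L / 4)) + 4 * T ^ 2 / (3 * L) * B * ell ^ 2) * (L * ell))
      with (T * (B * ell) * (16/10 + 11/15) + 4 / 3 * T ^ 2 * (B * ell) * ell ^ 2) by (field; lra).
    replace (3 * T ^ 2 * ell / L * (L * ell)) with (3 * T ^ 2 * ell ^ 2) by (field; lra).
    assert (1 <= ell ^ 2) by nra.
    assert (0 <= B * ell) by nra.
    assert (T * (B * ell) * (16/10 + 11/15) <= T * (87/100) * (7/3)) by nra.
    assert (4 / 3 * T ^ 2 * (B * ell) * ell ^ 2 <= 4 / 3 * T ^ 2 * (87/100) * ell ^ 2).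
    { pose proof (pow2_ge_0 T). apply Rmult_le_compat_r. apply pow2_ge_0. nra. }
    assert (T <= T ^ 2 * ell ^ 2 / 2) by (simpl; nra).
    nra. }
  lra.
Qed.

Lemma core_lip (x y : R) : -T <= x <= T -> -T <= y <= T ->
  Rabs ((h x - c * u x) - (h y - c * u y)) <= 3 * T ^ 2 / Rpower L (3/4) * Rabs (x - y).
Proof.
  intros Hx Hy.
  destruct (MVT_gen (fun t => h t - c * u t) y x
    (fun x => dee x + C * daa L x * u x + (C * aa L x - c) * (w x * sqrt (L - x ^ 2)))) as [z [Hz Hmv]].
  - intros t Ht. apply Et_der. split; [apply Rle_trans with (Rmin y x); [apply Rmin_glb; lra|lra] | apply Rle_trans with (Rmax y x); [lra|apply Rmax_lub; lra]].
  - intros t Ht. eapply cont_of_der. apply Et_der. split; [apply Rle_trans with (Rmin y x); [apply Rmin_glb; lra|lra] | apply Rle_trans with (Rmax y x); [lra|apply Rmax_lub; lra]].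
  - assert (Hz' : -T <= z <= T) by (split; [apply Rle_trans with (Rmin y x); [apply Rmin_glb; lra|lra] | apply Rle_trans with (Rmax y x); [lra|apply Rmax_lub; lra]]).
    cbv beta in Hmv. rewrite Hmv. rewrite Rabs_mult.
    apply Rmult_le_compat_r. apply Rabs_pos. apply der_bound. exact Hz'.
Qed.

End Core2.

Lemma fact_S_R (n : nat) : INR (fact (S n)) = INR (S n) * INR (fact n).
Proof. rewrite <- mult_INR. reflexivity. Qed.

Lemma fact_pos_R (n : nat) : 0 < INR (fact n).
Proof. apply lt_0_INR. apply lt_O_fact. Qed.

Lemma H0_pair (p : nat) :
  hermiteH (2 * p) 0 = (-1) ^ p * INR (fact (2 * p)) / INR (fact p) /\ hermiteH (S (2 * p)) 0 = 0.
Proof.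
  induction p as [|p [IH1 IH2]].
  - simpl. split; [field|ring].
  - replace (2 * S p)%nat with (S (S (2 * p))) by lia.
    assert (E1 : hermiteH (S (S (2 * p))) 0 = (-1) ^ S p * INR (fact (S (S (2 * p)))) / INR (fact (S p))).
    { rewrite H_rec, IH1. rewrite !fact_S_R. rewrite !S_INR, mult_INR. pose proof (fact_pos_R p). pose proof (pos_INR p).
      simpl. field. lra. }
    split; [exact E1|].
    change (hermiteH (S (S (S (2 * p)))) 0) with (2 * 0 * hermiteH (S (S (2 * p))) 0 - 2 * INR (S (S (2 * p))) * hermiteH (S (2 * p)) 0).
    rewrite IH2. ring.
Qed.

Lemma bb_fact (p : nat) : bb p * 4 ^ p * INR (fact p) ^ 2 = INR (fact (2 * p)).
Proof.
  induction p as [|p IH].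
  - simpl. ring.
  - replace (2 * S p)%nat with (S (S (2 * p))) by lia.
    rewrite !fact_S_R, <- IH. simpl bb. rewrite !S_INR, mult_INR. pose proof (pos_INR p).
    simpl. field. lra.
Qed.

Lemma sgn2 (p : nat) : ((-1) ^ p) ^ 2 = 1.
Proof. induction p; simpl in *. ring. nra. Qed.

Lemma r4 (z : R) : 0 < z -> Rpower z (1/4) ^ 4 = z.
Proof.
  intros Hz. rewrite <- Rpower_pow by (unfold Rpower; apply exp_pos). rewrite Rpower_mult.
  replace (1 / 4 * INR 4) with 1 by (simpl; field). apply Rpower_1. exact Hz.
Qed.

Lemma Kn4 (n : nat) : Kn n ^ 4 * (PI * (2 ^ n * INR (fact n)) ^ 2) = 1.
Proof.
  unfold Kn. pose proof PI_RGT_0.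
  assert (HX : 0 < 2 ^ n * INR (fact n)) by (apply Rmult_lt_0_compat; [apply pow_lt; lra|apply fact_pos_R]).
  assert (HS : sqrt (2 ^ n * INR (fact n)) * sqrt (2 ^ n * INR (fact n)) = 2 ^ n * INR (fact n)) by (apply sqrt_sqrt; lra).
  assert (HSp : 0 < sqrt (2 ^ n * INR (fact n))) by (apply sqrt_lt_R0; lra).
  assert (HR : 0 < Rpower PI (1/4)) by (unfold Rpower; apply exp_pos).
  pose proof (r4 PI H) as HR4.
  set (S := sqrt (2 ^ n * INR (fact n))) in *. set (Q := Rpower PI (1/4)) in *.
  rewrite <- HR4, <- HS. field. split; lra.
Qed.

Lemma rho_even (T L p w q : R) : 2 <= T -> L = 4 * p + 1 -> 4 * T ^ 2 + 1 <= L ->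
  p / (p + 1/2) <= w <= 1 -> 3 * L / 4 <= q <= L -> L - q <= T ^ 2 ->
  Rabs (w * L / q - 1) <= 4 * T ^ 2 / (3 * L).
Proof.
  intros HT HLp HL Hw Hq Hd.
  assert (Hp : 0 <= p) by nra.
  assert (HLq : 0 < q) by nra.
  apply Rabs_le. split.
  - assert (w * L / q >= w).
    { assert (0 <= w) by (assert (0 <= p / (p + 1/2)) by (apply Rdiv_le_0_compat; lra); lra). apply Rle_ge. apply Rmult_le_reg_r with q. lra. replace (w * L / q * q) with (w * L) by (field; lra). nra. }
    assert (p / (p + 1/2) = 1 - 1 / (2 * p + 1)) by (field; lra).
    assert (1 / (2 * p + 1) <= 4 * T ^ 2 / (3 * L)).
    { apply Rmult_le_reg_r with ((2 * p + 1) * (3 * L)). nra. field_simplify; [|lra|lra]. rewrite HLp. assert (4 <= T ^ 2) by nra. nra. }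
    lra.
  - assert (w * L / q <= L / q).
    { unfold Rdiv. apply Rmult_le_compat_r. left; apply Rinv_0_lt_compat; lra. nra. }
    assert (L / q - 1 <= 4 * T ^ 2 / (3 * L)).
    { replace (L / q - 1) with ((L - q) / q) by (field; lra).
      apply Rmult_le_reg_r with (q * (3 * L)). nra. field_simplify; [|lra|lra]. nra. }
    lra.
Qed.

Lemma rho_odd (T L p w q : R) : 2 <= T -> L = 4 * p + 3 -> 4 * T ^ 2 + 1 <= L ->
  p / (p + 1/2) <= w <= 1 -> 3 * L / 4 <= q <= L -> L - q <= T ^ 2 ->
  Rabs (w * (4 * p + 2) ^ 2 / (L * q) - 1) <= 4 * T ^ 2 / (3 * L).
Proof.
  intros HT HLp HL Hw Hq Hd.
  assert (Hp : 0 <= p) by nra.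
  assert (HLq : 0 < q) by nra.
  apply Rabs_le. split.
  - assert (w * (4 * p + 2) ^ 2 / (L * q) >= w * (4 * p + 2) ^ 2 / (L * L)).
    { apply Rle_ge. unfold Rdiv. apply Rmult_le_compat_l. assert (0 <= w) by (assert (0 <= p / (p + 1/2)) by (apply Rdiv_le_0_compat; lra); lra). apply Rmult_le_pos. lra. apply pow2_ge_0.
      apply Rinv_le_contravar. nra. nra. }
    assert (w * (4 * p + 2) ^ 2 / (L * L) >= p / (p + 1/2) * (4 * p + 2) ^ 2 / (L * L)).
    { apply Rle_ge. unfold Rdiv. apply Rmult_le_compat_r. left; apply Rinv_0_lt_compat; nra.
      apply Rmult_le_compat_r. apply pow2_ge_0. lra. }
    assert (p / (p + 1/2) * (4 * p + 2) ^ 2 / (L * L) = 1 - (16 * p + 9) / L ^ 2) by (rewrite HLp; field; lra).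
    assert ((16 * p + 9) / L ^ 2 <= 4 * T ^ 2 / (3 * L)).
    { apply Rmult_le_reg_r with (L ^ 2 * (3 * L)). nra. field_simplify; [|lra|lra]. rewrite HLp. assert (4 <= T ^ 2) by nra. apply Rle_trans with (16 * (4 * p + 3) ^ 2). nra. assert (0 <= (4 * p + 3) ^ 2) by apply pow2_ge_0. nra. }
    lra.
  - assert (w * (4 * p + 2) ^ 2 / (L * q) <= L / q).
    { apply Rmult_le_reg_r with (L * q). nra. field_simplify; [|lra|lra].
      assert ((4 * p + 2) ^ 2 <= L ^ 2) by (rewrite HLp; nra).
      assert (0 <= (4 * p + 2) ^ 2) by apply pow2_ge_0. nra. }
    assert (L / q - 1 <= 4 * T ^ 2 / (3 * L)).
    { replace (L / q - 1) with ((L - q) / q) by (field; lra).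
      apply Rmult_le_reg_r with (q * (3 * L)). nra. field_simplify; [|lra|lra]. nra. }
    lra.
Qed.

Lemma pi_gt3 : 3 < PI.
Proof. pose proof PI2_3_2. lra. Qed.

Lemma c4_val (p : nat) : (0 < p)%nat ->
  ((-1) ^ p / (sqrt PI * Rpower (INR p) (1/4))) ^ 4 = / (PI ^ 2 * INR p).
Proof.
  intros Hp. pose proof PI_RGT_0. apply lt_0_INR in Hp.
  assert (HS : sqrt PI * sqrt PI = PI) by (apply sqrt_sqrt; lra).
  assert (0 < sqrt PI) by (apply sqrt_lt_R0; lra).
  assert (0 < Rpower (INR p) (1/4)) by (unfold Rpower; apply exp_pos).
  pose proof (r4 (INR p) Hp) as R4. pose proof (sgn2 p) as S2.
  set (r := Rpower (INR p) (1/4)) in *. set (s := sqrt PI) in *. set (sg := (-1) ^ p) in *.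
  rewrite <- R4, <- HS.
  replace ((sg / (s * r)) ^ 4) with ((sg ^ 2) ^ 2 / (s * s) ^ 2 / r ^ 4) by (field; lra).
  rewrite S2. field. lra.
Qed.

Lemma c_nz (p : nat) : (-1) ^ p / (sqrt PI * Rpower (INR p) (1/4)) <> 0.
Proof.
  pose proof PI_RGT_0.
  assert (0 < sqrt PI) by (apply sqrt_lt_R0; lra).
  assert (0 < Rpower (INR p) (1/4)) by (unfold Rpower; apply exp_pos).
  apply Rmult_integral_contrapositive. split.
  - apply pow_nonzero. lra.
  - apply Rinv_neq_0_compat. nra.
Qed.

Lemma INR_ge8 (T : R) (n : nat) : 2 <= T -> 2 * T ^ 2 <= INR n -> (8 <= n)%nat.
Proof.
  intros HT Hn. destruct (le_lt_dec 8 n) as [|Hl]; [assumption|].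
  apply lt_INR in Hl. simpl in Hl. nra.
Qed.

Lemma dH_even0 (p : nat) : dH (2 * p) 0 = 0.
Proof.
  destruct p as [|p]. reflexivity.
  replace (2 * S p)%nat with (S (S (2 * p))) by lia.
  change (dH (S (S (2 * p))) 0) with (2 * INR (S (S (2 * p))) * hermiteH (S (2 * p)) 0).
  rewrite (proj2 (H0_pair p)). ring.
Qed.

Lemma even_case (T : R) (p : nat) :
  2 <= T -> 2 * T ^ 2 <= INR (2 * p) ->
  forall x y : R, -T <= x <= T -> -T <= y <= T ->
    Rabs (Etilde (2 * p) x) <= 2 * T ^ 2 / Rpower (2 * INR (2 * p) + 1) (5/4) /\
    Rabs (Etilde (2 * p) x - Etilde (2 * p) y) <= 3 * T ^ 2 / Rpower (2 * INR (2 * p) + 1) (3/4) * Rabs (x - y).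
Proof.
  intros HT Hn x y Hx Hy.
  pose proof (INR_ge8 T _ HT Hn) as H8.
  assert (Hp4 : (4 <= p)%nat) by lia.
  assert (Hp4R : 4 <= INR p) by (apply le_INR in Hp4; simpl in Hp4; lra).
  set (n := (2 * p)%nat) in *.
  set (L := 2 * INR n + 1).
  assert (HLp : L = 4 * INR p + 1) by (unfold L, n; rewrite mult_INR; simpl; ring).
  assert (HL : 4 * T ^ 2 + 1 <= L) by (unfold L; lra).
  set (c := (-1) ^ p / (sqrt PI * Rpower (INR p) (1/4))).
  assert (Eq : forall z, Etilde n z = hermite_fun n z - c * (fun z => cos (phi n z)) z).
  { intros z. unfold Etilde, n. rewrite Nat.div2_double, Nat.even_mul. reflexivity. }
  rewrite !Eq.
  set (u := fun z => cos (phi n z)). set (w := fun z => - sin (phi n z)).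
  set (C := hermite_fun n 0 / aa L 0).
  pose proof PI_RGT_0 as Hpi. pose proof pi_gt3 as Hpi3.
  pose proof (aa_pos L 0) as Ha0.
  assert (Ha04 : aa L 0 ^ 4 * L = 1).
  { pose proof (aa4 T L HT HL 0 ltac:(lra)) as X. rewrite <- X. f_equal. ring. }
  assert (Hh0 : hermite_fun n 0 = Kn n * ((-1) ^ p * INR (fact (2 * p)) / INR (fact p))).
  { unfold hermite_fun. fold (Kn n). unfold n. rewrite (proj1 (H0_pair p)).
    replace (- 0 ^ 2 / 2) with 0 by field. rewrite exp_0. ring. }
  assert (HKpos : 0 < Kn n).
  { unfold Kn. apply Rinv_0_lt_compat. apply Rmult_lt_0_compat. unfold Rpower; apply exp_pos.
    apply sqrt_lt_R0. apply Rmult_lt_0_compat. apply pow_lt; lra. apply fact_pos_R. }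
  pose proof (fact_pos_R p) as HG. pose proof (fact_pos_R (2 * p)) as HF.
  assert (Hc4 : c ^ 4 = / (PI ^ 2 * INR p)) by (apply c4_val; lia).
  assert (HC4 : C ^ 4 = bb p ^ 2 * L / PI).
  { unfold C. rewrite Hh0.
    pose proof (Kn4 n) as K4. pose proof (sgn2 p) as S2. pose proof (bb_fact p) as BF.
    assert (E2 : 2 ^ n = 4 ^ p) by (unfold n; rewrite pow_mult; f_equal; ring).
    rewrite E2 in K4. change (INR (fact (2 * p))) with (INR (fact n)) in *.
    set (K := Kn n) in *. set (F := INR (fact n)) in *. set (G := INR (fact p)) in *.
    set (a0 := aa L 0) in *. set (s := (-1) ^ p) in *.
    assert (H4p : 0 < 4 ^ p) by (apply pow_lt; lra).
    assert (K4' : K ^ 4 = / (PI * (4 ^ p * F) ^ 2)).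
    { apply (Rmult_eq_reg_r (PI * (4 ^ p * F) ^ 2)). rewrite K4. field. split; lra.
      apply Rmult_integral_contrapositive. split. lra. apply pow_nonzero. nra. }
    assert (A4' : a0 ^ 4 = / L).
    { apply (Rmult_eq_reg_r L). rewrite Ha04. field. lra. lra. }
    replace ((K * (s * F / G) / a0) ^ 4) with (K ^ 4 * (s ^ 2) ^ 2 * F ^ 4 / G ^ 4 / a0 ^ 4) by (field; lra).
    rewrite S2, K4', A4'. rewrite <- BF. pose proof (bb_pos p).
    field. repeat split; try lra. }
  assert (Hh : forall z, -T <= z <= T -> is_derive (hermite_fun n) z (dh n z)) by (intros; apply h_deriv).
  assert (Hdh : forall z, -T <= z <= T -> is_derive (dh n) z (-(L - z ^ 2) * hermite_fun n z)) by (intros; apply dh_deriv).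
  assert (Hu : forall z, -T <= z <= T -> is_derive u z (w z * sqrt (L - z ^ 2))).
  { intros z _. unfold u, w. eapply d_eq. apply (d_comp cos (phi n)). apply phi_derive.
    apply is_derive_Reals, derivable_pt_lim_cos. fold L. ring. }
  assert (Hw : forall z, -T <= z <= T -> is_derive w z (- u z * sqrt (L - z ^ 2))).
  { intros z _. unfold u, w. eapply d_eq. apply (d_comp (fun t => - sin t) (phi n)). apply phi_derive.
    auto_derive. auto. reflexivity. fold L. ring. }
  assert (Huw : forall z, u z ^ 2 + w z ^ 2 = 1).
  { intros z. unfold u, w. pose proof (sin2_cos2 (phi n z)). unfold Rsqr in H. simpl. lra. }
  assert (Hinit0 : hermite_fun n 0 = gg L u C 0).
  { unfold gg, u, C. rewrite phi_0, cos_0. field. lra. }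
  assert (Hinit1 : dh n 0 = dgg L u w C 0).
  { unfold dgg, daa, w, dh. rewrite phi_0, sin_0. unfold n. rewrite dH_even0. field.
    replace (L - 0 ^ 2) with L by ring. lra. }
  assert (HCc : 0 <= C * c).
  { assert (0 < sqrt PI) by (apply sqrt_lt_R0; lra).
    assert (0 < Rpower (INR p) (1/4)) by (unfold Rpower; apply exp_pos).
    replace (C * c) with (Kn n * INR (fact (2 * p)) / INR (fact p) / aa L 0 / (sqrt PI * Rpower (INR p) (1/4)) * ((-1) ^ p) ^ 2)
      by (unfold C, c; rewrite Hh0; field; repeat split; lra).
    rewrite sgn2. rewrite Rmult_1_r. apply Rlt_le.
    apply Rdiv_lt_0_compat; [|nra]. apply Rdiv_lt_0_compat; [|lra]. apply Rdiv_lt_0_compat; [|lra]. nra. }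
  assert (Hc : c <> 0) by apply c_nz.
  assert (Hi : forall z, -T <= z <= T -> Rabs (C ^ 4 / (L - z ^ 2) - c ^ 4) <= 4 * T ^ 2 / (3 * L) * c ^ 4).
  { intros z Hz. pose proof (q_lb T L HL z Hz) as [Hq Hz2]. pose proof (q_pos T L HT HL z Hz) as Hqp.
    rewrite HC4, Hc4.
    replace (bb p ^ 2 * L / PI / (L - z ^ 2) - / (PI ^ 2 * INR p))
      with (/ (PI ^ 2 * INR p) * (bb p ^ 2 * PI * INR p * L / (L - z ^ 2) - 1)) by (field; repeat split; lra).
    rewrite Rabs_mult. rewrite (Rabs_right (/ (PI ^ 2 * INR p))) by (apply Rle_ge; left; apply Rinv_0_lt_compat; nra).
    rewrite (Rmult_comm _ (/ (PI ^ 2 * INR p))). apply Rmult_le_compat_l. left; apply Rinv_0_lt_compat; nra.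
    apply rho_even with (p := INR p); try assumption.
    - apply wallis_bounds.
    - split; [lra|]. pose proof (pow2_ge_0 z). lra.
    - lra. }
  assert (Hii : c ^ 4 * L <= 55 / 100).
  { rewrite Hc4, HLp. apply Rmult_le_reg_r with (PI ^ 2 * INR p). nra.
    replace (/ (PI ^ 2 * INR p) * (4 * INR p + 1) * (PI ^ 2 * INR p)) with (4 * INR p + 1) by (field; lra). assert (9 <= PI ^ 2) by nra. nra. }
  split.
  - apply (core_bound T L (hermite_fun n) (dh n) u w C c); assumption.
  - apply (core_lip T L (hermite_fun n) (dh n) u w C c); assumption.
Qed.

Lemma odd_case (T : R) (p : nat) :
  2 <= T -> 2 * T ^ 2 <= INR (S (2 * p)) ->
  forall x y : R, -T <= x <= T -> -T <= y <= T ->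
    Rabs (Etilde (S (2 * p)) x) <= 2 * T ^ 2 / Rpower (2 * INR (S (2 * p)) + 1) (5/4) /\
    Rabs (Etilde (S (2 * p)) x - Etilde (S (2 * p)) y) <= 3 * T ^ 2 / Rpower (2 * INR (S (2 * p)) + 1) (3/4) * Rabs (x - y).
Proof.
  intros HT Hn x y Hx Hy.
  pose proof (INR_ge8 T _ HT Hn) as H8.
  assert (Hp4 : (4 <= p)%nat) by lia.
  assert (Hp4R : 4 <= INR p) by (apply le_INR in Hp4; simpl in Hp4; lra).
  set (n := S (2 * p)) in *.
  assert (HRn : INR n = 2 * INR p + 1) by (unfold n; rewrite S_INR, mult_INR; simpl; ring).
  set (L := 2 * INR n + 1).
  assert (HLp : L = 4 * INR p + 3) by (unfold L; rewrite HRn; ring).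
  assert (HL : 4 * T ^ 2 + 1 <= L) by (unfold L; lra).
  set (c := (-1) ^ p / (sqrt PI * Rpower (INR p) (1/4))).
  assert (Eq : forall z, Etilde n z = hermite_fun n z - c * (fun z => sin (phi n z)) z).
  { intros z. unfold Etilde, n. rewrite Nat.div2_succ_double, Nat.even_succ, Nat.odd_mul. reflexivity. }
  rewrite !Eq.
  set (u := fun z => sin (phi n z)). set (w := fun z => cos (phi n z)).
  set (C := dh n 0 / (aa L 0 * sqrt L)).
  pose proof PI_RGT_0 as Hpi. pose proof pi_gt3 as Hpi3.
  pose proof (aa_pos L 0) as Ha0.
  assert (HsL : 0 < sqrt L) by (apply sqrt_lt_R0; lra).
  assert (HsL2 : sqrt L * sqrt L = L) by (apply sqrt_sqrt; lra).
  assert (Ha04 : aa L 0 ^ 4 * L = 1).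
  { pose proof (aa4 T L HT HL 0 ltac:(lra)) as X. rewrite <- X. f_equal. ring. }
  assert (Hdh0 : dh n 0 = Kn n * (2 * INR n * ((-1) ^ p * INR (fact (2 * p)) / INR (fact p)))).
  { unfold dh. unfold n. change (dH (S (2 * p)) 0) with (2 * INR (S (2 * p)) * hermiteH (2 * p) 0).
    rewrite (proj1 (H0_pair p)).
    replace (- 0 ^ 2 / 2) with 0 by field. rewrite exp_0. ring. }
  assert (HKpos : 0 < Kn n).
  { unfold Kn. apply Rinv_0_lt_compat. apply Rmult_lt_0_compat. unfold Rpower; apply exp_pos.
    apply sqrt_lt_R0. apply Rmult_lt_0_compat. apply pow_lt; lra. apply fact_pos_R. }
  pose proof (fact_pos_R p) as HG. pose proof (fact_pos_R (2 * p)) as HF.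
  assert (Hc4 : c ^ 4 = / (PI ^ 2 * INR p)) by (apply c4_val; lia).
  assert (HC4 : C ^ 4 = 4 * INR n ^ 2 * bb p ^ 2 / (PI * L)).
  { unfold C. rewrite Hdh0.
    pose proof (Kn4 n) as K4. pose proof (sgn2 p) as S2. pose proof (bb_fact p) as BF.
    assert (E2 : 2 ^ n = 2 * 4 ^ p) by (unfold n; rewrite <- tech_pow_Rmult, pow_mult; f_equal; f_equal; ring).
    assert (EF : INR (fact n) = INR n * INR (fact (2 * p))) by (unfold n; apply fact_S_R).
    rewrite E2, EF in K4.
    set (K := Kn n) in *. set (F := INR (fact (2 * p))) in *. set (G := INR (fact p)) in *.
    set (a0 := aa L 0) in *. set (s := (-1) ^ p) in *. set (Rn := INR n) in *.
    assert (HRnp : 0 < Rn) by (rewrite HRn; lra).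
    assert (H4p : 0 < 4 ^ p) by (apply pow_lt; lra).
    assert (K4' : K ^ 4 = / (PI * (2 * 4 ^ p * (Rn * F)) ^ 2)).
    { apply (Rmult_eq_reg_r (PI * (2 * 4 ^ p * (Rn * F)) ^ 2)). rewrite K4. field. repeat split; lra.
      apply Rmult_integral_contrapositive. split. lra. apply pow_nonzero.
      apply Rmult_integral_contrapositive. split. lra. nra. }
    assert (A4' : a0 ^ 4 = / L).
    { apply (Rmult_eq_reg_r L). rewrite Ha04. field. lra. lra. }
    replace ((K * (2 * Rn * (s * F / G)) / (a0 * sqrt L)) ^ 4)
      with (K ^ 4 * 16 * Rn ^ 4 * (s ^ 2) ^ 2 * F ^ 4 / G ^ 4 / a0 ^ 4 / (sqrt L * sqrt L) ^ 2) by (field; lra).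
    rewrite S2, K4', A4', HsL2. rewrite <- BF. pose proof (bb_pos p).
    field. repeat split; try lra. }
  assert (Hh : forall z, -T <= z <= T -> is_derive (hermite_fun n) z (dh n z)) by (intros; apply h_deriv).
  assert (Hdh : forall z, -T <= z <= T -> is_derive (dh n) z (-(L - z ^ 2) * hermite_fun n z)) by (intros; apply dh_deriv).
  assert (Hu : forall z, -T <= z <= T -> is_derive u z (w z * sqrt (L - z ^ 2))).
  { intros z _. unfold u, w. eapply d_eq. apply (d_comp sin (phi n)). apply phi_derive.
    apply is_derive_Reals, derivable_pt_lim_sin. fold L. ring. }
  assert (Hw : forall z, -T <= z <= T -> is_derive w z (- u z * sqrt (L - z ^ 2))).
  { intros z _. unfold u, w. eapply d_eq. apply (d_comp cos (phi n)). apply phi_derive.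
    apply is_derive_Reals, derivable_pt_lim_cos. fold L. ring. }
  assert (Huw : forall z, u z ^ 2 + w z ^ 2 = 1).
  { intros z. unfold u, w. pose proof (sin2_cos2 (phi n z)). unfold Rsqr in H. simpl. lra. }
  assert (Hinit0 : hermite_fun n 0 = gg L u C 0).
  { unfold gg, u, hermite_fun. rewrite phi_0, sin_0. unfold n. rewrite (proj2 (H0_pair p)). ring. }
  assert (Hinit1 : dh n 0 = dgg L u w C 0).
  { unfold dgg, daa, u, w, C. rewrite phi_0, sin_0, cos_0. replace (L - 0 ^ 2) with L by ring. field. lra. }
  assert (HCc : 0 <= C * c).
  { assert (0 < sqrt PI) by (apply sqrt_lt_R0; lra).
    assert (0 < Rpower (INR p) (1/4)) by (unfold Rpower; apply exp_pos).
    assert (0 < INR n) by lra.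
    replace (C * c) with (Kn n * (2 * INR n) * INR (fact (2 * p)) / INR (fact p) / (aa L 0 * sqrt L) / (sqrt PI * Rpower (INR p) (1/4)) * ((-1) ^ p) ^ 2)
      by (unfold C, c; rewrite Hdh0; field; repeat split; lra).
    rewrite sgn2. rewrite Rmult_1_r. apply Rlt_le.
    apply Rdiv_lt_0_compat; [|nra]. apply Rdiv_lt_0_compat; [|nra]. apply Rdiv_lt_0_compat; [|lra]. apply Rmult_lt_0_compat; [apply Rmult_lt_0_compat|]; lra. }
  assert (Hc : c <> 0) by apply c_nz.
  assert (Hi : forall z, -T <= z <= T -> Rabs (C ^ 4 / (L - z ^ 2) - c ^ 4) <= 4 * T ^ 2 / (3 * L) * c ^ 4).
  { intros z Hz. pose proof (q_lb T L HL z Hz) as [Hq Hz2]. pose proof (q_pos T L HT HL z Hz) as Hqp.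
    rewrite HC4, Hc4, HRn.
    replace (4 * (2 * INR p + 1) ^ 2 * bb p ^ 2 / (PI * L) / (L - z ^ 2) - / (PI ^ 2 * INR p))
      with (/ (PI ^ 2 * INR p) * (bb p ^ 2 * PI * INR p * (4 * INR p + 2) ^ 2 / (L * (L - z ^ 2)) - 1)) by (field; repeat split; lra).
    rewrite Rabs_mult. rewrite (Rabs_right (/ (PI ^ 2 * INR p))) by (apply Rle_ge; left; apply Rinv_0_lt_compat; nra).
    rewrite (Rmult_comm _ (/ (PI ^ 2 * INR p))). apply Rmult_le_compat_l. left; apply Rinv_0_lt_compat; nra.
    apply rho_odd; try assumption.
    - apply wallis_bounds.
    - split; [lra|]. pose proof (pow2_ge_0 z). lra.
    - lra. }
  assert (Hii : c ^ 4 * L <= 55 / 100).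
  { rewrite Hc4, HLp. apply Rmult_le_reg_r with (PI ^ 2 * INR p). nra.
    replace (/ (PI ^ 2 * INR p) * (4 * INR p + 3) * (PI ^ 2 * INR p)) with (4 * INR p + 3) by (field; lra). assert (9 <= PI ^ 2) by nra. nra. }
  split.
  - apply (core_bound T L (hermite_fun n) (dh n) u w C c); assumption.
  - apply (core_lip T L (hermite_fun n) (dh n) u w C c); assumption.
Qed.

Theorem mainTheorem4 (T : R) (n : nat) :
  2 <= T -> 2 * T ^ 2 <= INR n ->
  forall x y : R, Rabs x <= T -> Rabs y <= T ->
    Rabs (Etilde n x) <= 2 * T ^ 2 / Rpower (2 * INR n + 1) (5/4) /\
    Rabs (Etilde n x - Etilde n y) <= 3 * T ^ 2 / Rpower (2 * INR n + 1) (3/4) * Rabs (x - y).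
Proof.
  intros HT Hn x y Hx Hy.
  apply Rabs_le_between in Hx. apply Rabs_le_between in Hy.
  destruct (Nat.Even_or_Odd n) as [[p Hp]|[p Hp]]; subst n.
  - apply even_case; assumption.
  - replace (2 * p + 1)%nat with (S (2 * p)) in * by lia. apply odd_case; assumption.
Qed.
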